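(* Let $\mathcal{H}$ be a complex linear space with a non-degenerate indefinite inner product $[\cdot,\cdot]$, and $\mathcal{F}_{++}=\{f\in\mathcal{H}:[f,f]>0\}$. Let $\{W(t):t\ge0\}$ be a family of linear operators on $\mathcal{H}$ with $W(0)=I$ and $W(t_1+t_2)=W(t_1)W(t_2)=W(t_2)W(t_1)$ for all $t_1,t_2\ge0$, such that each $W(t)$ maps $\mathcal{F}_{++}$ onto $\mathcal{F}_{++}$ in a one-to-one manner. For $t\ge0$ put $$\theta(t)=\inf_{f\in\mathcal{F}_{++}}\frac{[W(t)f,W(t)f]}{[f,f]}.$$ If for some $f\in\mathcal{F}_{++}$ the function $r(t)=[W(t)f,W(t)f]$ is continuous on $[0,\infty)$, then there exists $\alpha\in\mathbb{R}$ such that $\theta(t)=e^{\alpha t}$ for all $t\ge0$.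
   Context: An indefinite inner product is a Hermitian sesquilinear form $[\cdot,\cdot]$ on $\mathcal{H}$ (linear in the second argument) admitting vectors of strictly positive and strictly negative square; non-degenerate means $[f,g]=0$ for all $g$ forces $f=0$. *)

(* Defs.v *)
From HB Require Import structures.
From mathcomp Require Import all_boot all_order all_algebra.
From mathcomp Require Import all_classical all_reals all_analysis.
From mathcomp Require Import complex.
Set Implicit Arguments. Unset Strict Implicit. Unset Printing Implicit Defensive.
Import Order.TTheory GRing.Theory Num.Theory.
Import numFieldNormedType.Exports.
Local Open Scope ring_scope.
Local Open Scope classical_set_scope.

Notation cplx R := (complex.complex R).

(* Hermitian sesquilinear form on V, linear in the SECOND argument. *)
Definition ip_hermitian_sesq (R : realType) (V : lmodType (cplx R))
  (ip : V -> V -> cplx R) : Prop :=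
  (forall f g h (a : cplx R), ip f (a *: g + h) = a * ip f g + ip f h) /\
  (forall f g, ip g f = complex.conjc (ip f g)).

Definition ip_nondegenerate (R : realType) (V : lmodType (cplx R))
  (ip : V -> V -> cplx R) : Prop :=
  forall f, (forall g, ip f g = 0) -> f = 0.

Definition ip_indefinite (R : realType) (V : lmodType (cplx R))
  (ip : V -> V -> cplx R) : Prop :=
  (exists f, 0 < ip f f) /\ (exists g, ip g g < 0).

Definition Fpp (R : realType) (V : lmodType (cplx R))
  (ip : V -> V -> cplx R) : set V := [set f | 0 < ip f f].

(* ip_theta(t) = inf_{f in F_{++}} [W f, W f] / [f, f]  (real parts; these
   quantities are real since the form is Hermitian). *)
Definition ip_theta (R : realType) (V : lmodType (cplx R))
  (ip : V -> V -> cplx R) (W : R -> V -> V) (t : R) : R :=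
  inf [set complex.Re (ip (W t f) (W t f)) / complex.Re (ip f f) | f in Fpp ip].

(* Main.v *)
Require Import Defs.
From HB Require Import structures.
From mathcomp Require Import all_boot all_order all_algebra.
From mathcomp Require Import all_classical all_reals all_analysis.
From mathcomp Require Import complex.
From mathcomp Require Import ring lra.
Import Order.TTheory GRing.Theory Num.Theory.
Import numFieldNormedType.Exports.
Local Open Scope ring_scope.
Local Open Scope classical_set_scope.

Lemma L_large (R : realType) (a b c : R) : 0 < c ->
  exists U, 0 <= U /\ forall u, U <= u -> 0 < a + 2 * u * b + u ^+ 2 * c.
Proof.
move=> c0; exists (1 + (`|a| + 2 * `|b|) / c); split.
  have : 0 <= (`|a| + 2 * `|b|) / c.
    by apply: divr_ge0; [apply: addr_ge0; rewrite ?normr_ge0 ?mulr_ge0 // normr_ge0|exact: ltW].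
  lra.
move=> u Hu.
have h1 : `|a| + 2 * `|b| < u * c.
  have : (1 + (`|a| + 2 * `|b|) / c) * c <= u * c by rewrite ler_pM2r.
  rewrite mulrDl mul1r divfK ?gt_eqF //. lra.
have u1 : 1 <= u.
  apply: le_trans Hu; rewrite lerDl; apply: divr_ge0; last exact: ltW.
  by apply: addr_ge0; rewrite ?normr_ge0 // mulr_ge0 // normr_ge0.
have ha : - `|a| <= a by have := ler_norm (-a); rewrite normrN; lra.
have hb : - `|b| <= b by have := ler_norm (-b); rewrite normrN; lra.
have hb2 : - (u * `|b|) <= u * b by rewrite -mulrN ler_wpM2l //; lra.
have h2 : u * (`|a| + 2 * `|b|) <= u * (u * c) by rewrite ler_wpM2l //; [lra|exact: ltW].
have h3 : `|a| <= u * `|a| by rewrite -{1}(mul1r `|a|) ler_wpM2r ?normr_ge0.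
have -> : u ^+ 2 * c = u * (u * c) by rewrite expr2 mulrA.
rewrite mulrDr in h2. nra.
Qed.

Lemma L_small (R : realType) (a b c : R) : a < 0 ->
  exists e, 0 < e /\ a + 2 * e * b + e ^+ 2 * c < 0.
Proof.
move=> a0.
set M := 2 * `|b| + `|c| + 1.
have M1 : 1 <= M by rewrite /M lerDr addr_ge0 // ?mulr_ge0 // normr_ge0.
exists (Num.min 1 (- a / (2 * M))).
have Mp : 0 < M by lra.
have e0 : 0 < Num.min 1 (- a / (2 * M)).
  rewrite lt_min ltr01 /= divr_gt0 //; lra.
split => //.
set e := Num.min 1 _ in e0 *.
have e1 : e <= 1 by rewrite /e ge_min lexx.
have e2 : e <= - a / (2 * M) by rewrite /e ge_min lexx orbT.
have e3 : e * M <= - a / 2.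
  have := e2; rewrite ler_pdivlMr; last lra.
  move=> h; rewrite ler_pdivlMr; last lra. lra.
have hb : e * b <= e * `|b| by rewrite ler_wpM2l ?ler_norm //; lra.
have hc : e ^+ 2 * c <= e * `|c|.
  have : e ^+ 2 * c <= e ^+ 2 * `|c| by rewrite ler_wpM2l ?ler_norm // sqr_ge0.
  have : e ^+ 2 * `|c| <= e * `|c|.
    have h : e * e <= e by nra.
    have := ler_wpM2r (normr_ge0 c) h. by rewrite expr2.
  lra.
rewrite /M in e3. lra.
Qed.

Lemma L_two (R : realType) (A B s1 s2 : R) : s1 != s2 ->
  A + 2 * s1 * B = 0 -> A + 2 * s2 * B = 0 -> A = 0.
Proof.
move=> ne h1 h2.
have : (s1 - s2) * B = 0 by lra.
move/eqP; rewrite mulf_eq0 subr_eq0 (negbTE ne) /= => /eqP B0.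
by move: h1; rewrite B0 mulr0 addr0.
Qed.

Lemma L_three (R : realType) (A B C U : R) :
  A + 2 * U * B + U ^+ 2 * C = 0 ->
  A + 2 * (U + 1) * B + (U + 1) ^+ 2 * C = 0 ->
  A + 2 * (U + 2) * B + (U + 2) ^+ 2 * C = 0 -> A = 0.
Proof.
move=> h0 h1 h2.
have C0 : C = 0 by nra.
move: h0 h1; rewrite C0 !mulr0 !addr0 => h0 h1.
have B0 : B = 0 by lra.
by move: h0; rewrite B0 mulr0 addr0.
Qed.

Lemma cauchy_exp (R : realType) (K : R -> R) :
  (forall t : R, 0 <= t -> 0 < K t) ->
  K 0 = 1 ->
  (forall a b : R, 0 <= a -> 0 <= b -> K (a + b) = K a * K b) ->
  (forall t : R, 0 <= t -> (fun s => ln (K s)) @ within (`[0, +oo[ : set R) (nbhs t) --> ln (K t)) ->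
  forall t : R, 0 <= t -> K t = expR (ln (K 1) * t).
Proof.
move=> Kpos K0 KM Kc.
pose al := ln (K 1).
pose h := fun t => ln (K t) - al * t.
have hD : forall a b, 0 <= a -> 0 <= b -> h (a + b) = h a + h b.
  move=> a b a0 b0; rewrite /h KM // lnM ?posrE ?Kpos //; ring.
have hn : forall n x, 0 <= x -> h (n%:R * x) = n%:R * h x.
  move=> n x x0; elim: n => [|n IH]; first by rewrite !mul0r /h K0 ln1 mulr0 subrr.
  rewrite -natr1 !mulrDl !mul1r hD ?IH //; last by apply: mulr_ge0.
have h1 : h 1 = 0 by rewrite /h mulr1 subrr.
have hrat : forall k n, (0 < n)%N -> h (k%:R / n%:R) = 0.
  move=> k n n0.
  have nz : (n%:R : R) != 0 by rewrite pnatr_eq0 -lt0n.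
  have inv0 : 0 <= (n%:R : R)^-1 by rewrite invr_ge0.
  have hinv : h (n%:R^-1) = 0.
    have := hn n _ inv0; rewrite mulfV // h1 => /esym /eqP.
    by rewrite mulf_eq0 (negbTE nz) /= => /eqP.
  by rewrite hn // hinv mulr0.
move=> t t0.
suff ht : h t = 0.
  by rewrite -/al -[LHS]lnK ?posrE ?Kpos //; congr expR; move: ht; rewrite /h; lra.
apply/eqP; apply/negP => /negP htn.
have hpos : 0 < `|h t| by rewrite normr_gt0.
have := Kc t t0; move/cvgrPdist_lt => /(_ (`|h t| / 2)).
have : 0 < `|h t| / 2 by rewrite divr_gt0.
move=> /[swap] /[apply].
rewrite /= => /nbhs_ballP [d /= d0 Hd].
pose d' := Num.min d (`|h t| / 2 / (`|al| + 1)).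
have al1 : 0 < `|al| + 1 by rewrite ltr_pwDr // normr_ge0.
have d'0 : 0 < d' by rewrite lt_min d0 /= !divr_gt0.
have [n n0 Hn] : exists2 n : nat, (0 < n)%N & n%:R^-1 < d'.
  exists (Num.Def.trunc (d'^-1)).+1 => //.
  have dinv : 0 < d'^-1 by rewrite invr_gt0.
  have := truncn_itv (ltW dinv) => /andP[_ Hlt].
  by rewrite -[X in _ < X](invrK d') ltf_pV2 ?posrE ?invr_gt0 ?ltr0n //.
pose k := Num.Def.trunc (n%:R * t).
have := truncn_itv (mulr_ge0 (ler0n _ n) t0) => /andP[hk1 hk2].
have nR : (0 : R) < n%:R by rewrite ltr0n.
pose s : R := k%:R / n%:R.
have s0 : 0 <= s by rewrite /s divr_ge0.
have st1 : s <= t by rewrite /s ler_pdivrMr // mulrC.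
have st2 : t - s < n%:R^-1.
  have : t < (k%:R + 1) / n%:R by rewrite ltr_pdivlMr // mulrC natr1.
  rewrite mulrDl mul1r /s. lra.
have hs := hrat k n n0.
have : ball t d s.
  rewrite -ball_normE /= ger0_norm; last lra.
  have : n%:R^-1 <= d by apply: le_trans (ltW Hn) _; rewrite ge_min lexx.
  lra.
have s0' : s \in `[0, +oo[%R by rewrite in_itv /= andbT.
move=> /Hd /(_ s0') /=.
rewrite -/s.
have Hal : `|al * t - al * s| < `|h t| / 2.
  rewrite -mulrBr normrM (@ger0_norm _ (t - s)); last lra.
  have : n%:R^-1 <= `|h t| / 2 / (`|al| + 1) by apply: le_trans (ltW Hn) _; rewrite ge_min lexx orbT.
  rewrite ler_pdivlMr // => H2.
  have H3 : `|al| * (t - s) <= `|al| * n%:R^-1 by apply: ler_wpM2l; [exact: normr_ge0| lra].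
  have H4 : 0 <= `|al| * n%:R^-1 by apply: mulr_ge0; [exact: normr_ge0| rewrite invr_ge0 ler0n].
  nra.
move: hs; rewrite /h => hs.
have E : h t = (ln (K t) - ln (K s)) - (al * t - al * s).
  rewrite /h; rewrite -/s in hs; lra.
move=> H1.
have := ler_normB (ln (K t) - ln (K s)) (al * t - al * s); rewrite -E.
lra.
Qed.

Local Open Scope complex_scope.


Lemma herm_Im (R : realType) (V : lmodType (cplx R)) (ip : V -> V -> cplx R) :
  ip_hermitian_sesq ip -> forall f, complex.Im (ip f f) = 0.
Proof.
move=> [_ H] f; have := H f f; case: (ip f f) => a b /= [] Hb.
have : b + b = 0 by rewrite {1}Hb addNr. lra.
Qed.

Lemma Fpp_Q (R : realType) (V : lmodType (cplx R)) (ip : V -> V -> cplx R) :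
  ip_hermitian_sesq ip -> forall f, Fpp ip f <-> 0 < complex.Re (ip f f).
Proof.
move=> H f; rewrite /Fpp /= ltcE herm_Im //=; split.
  by case/andP.
by move=> ->; rewrite eqxx.
Qed.

Lemma Q_expand (R : realType) (V : lmodType (cplx R)) (ip : V -> V -> cplx R) :
  ip_hermitian_sesq ip -> forall f x (s : R),
  complex.Re (ip (f + s%:C *: x) (f + s%:C *: x)) =
  complex.Re (ip f f) + 2 * s * complex.Re (ip x f) + s ^+ 2 * complex.Re (ip x x).
Proof.
move=> [H1 H2] f x s.
rewrite [f + _]addrC.
set u := s%:C *: x + f.
rewrite (H1 u x f s%:C) (H2 x u) (H2 f u) /u (H1 x x f s%:C) (H1 f x f s%:C) (H2 f x).
case: (ip x x) => a1 b1; case: (ip f x) => a2 b2; case: (ip f f) => a3 b3.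
rewrite /=.
rewrite /real_complex_def. simpc => /=. ring.
Qed.

Lemma key (R : realType) (V : lmodType (cplx R)) (ip : V -> V -> cplx R)
  (T : {linear V -> V}) :
  ip_hermitian_sesq ip -> ip_indefinite ip ->
  (forall f, Fpp ip f -> Fpp ip (T f)) -> {in Fpp ip &, injective T} ->
  (forall g, Fpp ip g -> exists2 f, Fpp ip f & T f = g) ->
  forall x0, Fpp ip x0 ->
  forall f, complex.Re (ip (T f) (T f)) =
     complex.Re (ip (T x0) (T x0)) / complex.Re (ip x0 x0) * complex.Re (ip f f).
Proof.
move=> Hh [_ [y0 Hy0]] Tpos Tinj Tsurj x0 Hx0.
pose Q := fun f => complex.Re (ip f f).
have QE : forall f x (s : R), Q (f + s%:C *: x) = Q f + 2 * s * complex.Re (ip x f) + s ^+ 2 * Q x.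
  by move=> f x s; rewrite /Q Q_expand.
have TE : forall f x (s : R), T (f + s%:C *: x) = T f + s%:C *: T x.
  by move=> f x s; rewrite linearD linearZ.
have FQ : forall f, Fpp ip f <-> 0 < Q f by move=> f; rewrite /Q Fpp_Q.
have Qy0 : complex.Re (ip y0 y0) < 0.
  by move: Hy0; rewrite ltcE herm_Im //= => /andP[].
have Qx0 : 0 < Q x0 by apply/FQ.
have stepA : forall f, Q f <= 0 -> Q (T f) <= 0.
  move=> f Qf; rewrite leNgt; apply/negP => QTf.
  have [h Hh' Thf] := Tsurj (T f) (proj2 (FQ _) QTf).
  have Qh : 0 < Q h by apply/FQ.
  have [U [U0 HU]] := @L_large _ (Q f) (complex.Re (ip h f)) _ Qh.
  have := HU U (lexx U); rewrite -QE => Qg2.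
  have Qg1 : 0 < Q (h + U%:C *: h).
    rewrite QE /Q; have -> : complex.Re (ip h h) = Q h by [].
    have : 0 <= U * Q h by apply: mulr_ge0 => //; exact: ltW.
    have : 0 <= U ^+ 2 * Q h by apply: mulr_ge0 => //; [exact: sqr_ge0|exact: ltW].
    lra.
  have eqT : T (h + U%:C *: h) = T (f + U%:C *: h) by rewrite !TE Thf.
  have := Tinj _ _ (mem_set (proj2 (FQ _) Qg1)) (mem_set (proj2 (FQ _) Qg2)) eqT.
  move/addIr => hf; move: Qf; rewrite -hf; lra.
have stepB : forall f, Q f = 0 -> Q (T f) = 0.
  move=> f Qf; apply/eqP; rewrite eq_le stepA ?Qf //=.
  rewrite leNgt; apply/negP => QTf.
  pose P := complex.Re (ip x0 f).
  have [sg [sg1 sgP]] : exists sg : R, sg ^+ 2 = 1 /\ 0 <= sg * P.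
    case: (lerP 0 P) => HP; first by exists 1; rewrite expr1n mul1r.
    by exists (-1); rewrite sqrrN expr1n mulN1r; lra.
  have [e [e0 He]] := @L_small _ _ (sg * complex.Re (ip (T x0) (T f))) (Q (T x0)) QTf.
  have Qg : 0 < Q (f + (sg * e)%:C *: x0).
    rewrite QE Qf -/P exprMn sg1 mul1r.
    have : 0 <= e * (sg * P) by apply: mulr_ge0 => //; exact: ltW.
    have : 0 < e ^+ 2 * Q x0 by apply: mulr_gt0 => //; apply: exprn_gt0.
    lra.
  have := proj1 (FQ _) (Tpos _ (proj2 (FQ _) Qg)).
  rewrite TE QE exprMn sg1 mul1r.
  have -> : 2 * (sg * e) * complex.Re (ip (T x0) (T f)) = 2 * e * (sg * complex.Re (ip (T x0) (T f))) by ring.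
  lra.
set k := Q (T x0) / Q x0.
have QTx0 : Q (T x0) = k * Q x0.
  rewrite /k divfK //. exact: lt0r_neq0.
have stepC : forall f, Q f < 0 -> Q (T f) = k * Q f.
  move=> f Qf.
  pose a := Q f; pose b := complex.Re (ip x0 f); pose c := Q x0.
  pose D := b ^+ 2 - a * c.
  have D0 : 0 < D.
    have h : a * c < 0 by rewrite /c pmulr_llt0.
    have := sqr_ge0 b; rewrite /D; lra.
  pose sq := Num.sqrt D.
  have sq0 : 0 < sq by rewrite /sq sqrtr_gt0.
  have sq2 : sq ^+ 2 = D by rewrite /sq sqr_sqrtr // ltW.
  have root : forall s, c * s + b = sq \/ c * s + b = - sq -> Q (f + s%:C *: x0) = 0.
    move=> s Hs; rewrite QE -/a -/b -/c.
    have : c * (a + 2 * s * b + s ^+ 2 * c) = 0.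
      have -> : c * (a + 2 * s * b + s ^+ 2 * c) = (c * s + b) ^+ 2 - D by rewrite /D; ring.
      by case: Hs => ->; rewrite ?sqrrN sq2 subrr.
    by move/eqP; rewrite mulf_eq0 gt_eqF //= => /eqP.
  pose s1 := (sq - b) / c; pose s2 := (- sq - b) / c.
  have r1 : Q (f + s1%:C *: x0) = 0 by apply: root; left; rewrite /s1 mulrC divfK ?gt_eqF //; ring.
  have r2 : Q (f + s2%:C *: x0) = 0 by apply: root; right; rewrite /s2 mulrC divfK ?gt_eqF //; ring.
  have t1 := stepB _ r1; have t2 := stepB _ r2.
  rewrite TE QE QTx0 in t1; rewrite TE QE QTx0 in t2.
  rewrite QE -/a -/b -/c in r1; rewrite QE -/a -/b -/c in r2.
  have ne : s1 != s2.
    rewrite /s1 /s2; apply/eqP => /(congr1 (fun z => z * c)).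
    rewrite !divfK ?gt_eqF //; lra.
  have Ez : forall A B C : R, A = 0 -> B = 0 -> C = A - k * B -> C = 0.
    by move=> A B C -> -> ->; rewrite mulr0 subr0.
  have := @L_two _ (Q (T f) - k * a) (complex.Re (ip (T x0) (T f)) - k * b) _ _ ne.
  have e1 : Q (T f) - k * a + 2 * s1 * (complex.Re (ip (T x0) (T f)) - k * b) = 0.
    apply: (Ez _ _ _ t1 r1); rewrite /a /b /c; ring.
  have e2 : Q (T f) - k * a + 2 * s2 * (complex.Re (ip (T x0) (T f)) - k * b) = 0.
    apply: (Ez _ _ _ t2 r2); rewrite /a /b /c; ring.
  by move=> /(_ e1 e2) /eqP; rewrite subr_eq0 => /eqP.
move=> f.
have [U [U0 HU]] := @L_large _ (- Q f) (- complex.Re (ip y0 f)) (- Q y0) ltac:(rewrite /Q; lra).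
have neg : forall u, U <= u -> Q (f + u%:C *: y0) < 0.
  move=> u Hu; have := HU u Hu; rewrite QE; rewrite /Q. lra.
have eq : forall u, U <= u -> (Q (T f) - k * Q f) + 2 * u * (complex.Re (ip (T y0) (T f)) - k * complex.Re (ip y0 f)) + u ^+ 2 * (Q (T y0) - k * Q y0) = 0.
  move=> u Hu; have := stepC _ (neg u Hu); rewrite TE !QE => h.
  rewrite -[RHS](subrr (Q (T f) + 2 * u * complex.Re (ip (T y0) (T f)) + u ^+ 2 * Q (T y0))).
  rewrite {2}h; ring.
apply/eqP; rewrite -subr_eq0; apply/eqP.
apply: (@L_three _ _ _ _ _ (eq U (lexx U))).
  by apply: eq; lra.
by apply: eq; lra.
Qed.

Local Close Scope complex_scope.

Theorem theorem2p6 (R : realType) (V : lmodType (cplx R))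
  (ip : V -> V -> cplx R) (W : R -> {linear V -> V}) :
  ip_hermitian_sesq ip -> ip_nondegenerate ip -> ip_indefinite ip ->
  (forall v, W 0 v = v) ->
  (forall t1 t2, 0 <= t1 -> 0 <= t2 ->
     (forall v, W (t1 + t2) v = W t1 (W t2 v)) /\
     (forall v, W (t1 + t2) v = W t2 (W t1 v))) ->
  (forall t, 0 <= t ->
     (forall f, Fpp ip f -> Fpp ip (W t f)) /\
     {in Fpp ip &, injective (W t)} /\
     (forall g, Fpp ip g -> exists2 f, Fpp ip f & W t f = g)) ->
  (exists2 f, Fpp ip f &
     {within `[0, +oo[, continuous (fun t => complex.Re (ip (W t f) (W t f)))}) ->
  exists alpha : R, forall t, 0 <= t -> ip_theta ip (fun s => W s) t = expR (alpha * t).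
Proof.
move=> Hh _ Hind W0 Wadd Wprop [f0 Hf0 Hcont].
pose Q := fun f => complex.Re (ip f f).
pose r := fun t => Q (W t f0).
have Qf0 : 0 < Q f0 by apply/Fpp_Q.
have r0 : r 0 = Q f0 by rewrite /r W0.
pose K := fun t => r t / r 0.
have Kt : forall t, 0 <= t -> forall f, Q (W t f) = K t * Q f.
  move=> t t0 f; have [P1 [P2 P3]] := Wprop t t0.
  rewrite /K r0 /r /Q. exact: (@key _ _ _ (W t) Hh Hind P1 P2 P3 _ Hf0).
have Kpos : forall t, 0 <= t -> 0 < K t.
  move=> t t0; rewrite /K r0 divr_gt0 //; apply/Fpp_Q => //.
  by have [P1 _] := Wprop t t0; apply: P1.
have K0 : K 0 = 1 by rewrite /K divff // r0 gt_eqF.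
have KM : forall a b, 0 <= a -> 0 <= b -> K (a + b) = K a * K b.
  move=> a b a0 b0; rewrite {1}/K /r (proj1 (Wadd a b a0 b0)) Kt // -/(r b).
  by rewrite /K mulrA.
have Kc : forall t : R, 0 <= t -> (fun s => ln (K s)) @ within (`[0, +oo[ : set R) (nbhs t) --> ln (K t).
  move=> t t0.
  have := proj1 (subspace_continuousP _ _) Hcont t.
  have tA : (`[0, +oo[ : set R) t by rewrite /= in_itv /= andbT.
  move=> /(_ tA) Hr.
  have HK : K s @[s --> within (`[0, +oo[ : set R) (nbhs t)] --> K t.
    exact: cvgMl Hr.
  exact: (cvg_comp _ _ HK (continuous_ln (Kpos t t0))).
exists (ln (K 1)) => t t0.
have -> : ip_theta ip (fun s => W s) t = K t.
  rewrite /ip_theta.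
  suff -> : [set complex.Re (ip (W t f) (W t f)) / complex.Re (ip f f) | f in Fpp ip] = [set K t].
    exact: inf1.
  apply/seteqP; split => z /=.
    case=> f Hf <-; have := Kt t t0 f; rewrite /Q => ->; rewrite mulfK //.
    by apply: lt0r_neq0; apply/Fpp_Q.
  move=> ->; exists f0 => //; have := Kt t t0 f0; rewrite /Q => ->; rewrite mulfK //.
  exact: lt0r_neq0.
exact: cauchy_exp Kpos K0 KM Kc t t0.
Qed.
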